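(* For all $X\subseteq\mathrm{Bunch}$ and $Y\in\mathcal C$, the set $X-\!\!\bullet\,Y=\{\Delta\in\mathrm{Bunch}\mid\forall\Delta'\in X.\ (\Delta\mathbin{,}\Delta')\in Y\}$ belongs to $\mathcal C$ (i.e. is closed).
   Context: Formulas of BI: $\varphi,\psi ::= \top \mid \bot \mid \varphi\wedge\psi \mid \varphi\vee\psi \mid \varphi\to\psi \mid \mathsf{emp} \mid \varphi\ast\psi \mid \varphi -\!\!\ast\, \psi \mid a$, $a\in\mathrm{Atom}$. Bunches are finite binary trees whose leaves are formulas or empty bunches $\varnothing_m,\varnothing_a$ and whose internal nodes are labelled by the multiplicative comma ($\Delta_1\mathbin{,}\Delta_2$) or the additive semicolon ($\Delta_1\mathbin{;}\Delta_2$). A bunched context $\Delta(-)$ is a bunch with one leaf replaced by a hole; $\Delta(\Gamma)$ fills it with $\Gamma$. Bunch equivalence $\equiv$ is the least equivalence relation making $\mathbin{,}$ commutative, associative with unit $\varnothing_m$, $\mathbin{;}$ commutative, associative with unit $\varnothing_a$, and closed under contexts; $\mathrm{Bunch}$ is the set of bunches modulo $\equiv$, a commutative monoid under $\Delta\cdot\Delta'=(\Delta\mathbin{,}\Delta')$ with unit $\varnothing_m$, and $X-\!\!\bullet\,Y$ denotes the residual of this monoid's pointwise product on $\mathcal P(\mathrm{Bunch})$. The cut-free BI sequent calculus ($\Delta\vdash_{\mathsf{cf}}\varphi$) has the rules: (ax) $a\vdash a$ for atoms $a$; (equiv) from $\Delta'\vdash\varphi$, $\Delta\equiv\Delta'$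 infer $\Delta\vdash\varphi$; (W;) from $\Delta(\Delta_1)\vdash\varphi$ infer $\Delta(\Delta_1\mathbin{;}\Delta_2)\vdash\varphi$; (C;) from $\Delta(\Delta_1\mathbin{;}\Delta_1)\vdash\varphi$ infer $\Delta(\Delta_1)\vdash\varphi$; (empR) $\varnothing_m\vdash\mathsf{emp}$; (empL) from $\Delta(\varnothing_m)\vdash\varphi$ infer $\Delta(\mathsf{emp})\vdash\varphi$; ($\ast$R) from $\Delta_1\vdash\varphi$, $\Delta_2\vdash\psi$ infer $\Delta_1\mathbin{,}\Delta_2\vdash\varphi\ast\psi$; ($\ast$L) from $\Delta(\varphi\mathbin{,}\psi)\vdash\chi$ infer $\Delta(\varphi\ast\psi)\vdash\chi$; ($-\!\ast$R) from $\Delta\mathbin{,}\varphi\vdash\psi$ infer $\Delta\vdash\varphi-\!\!\ast\,\psi$; ($-\!\ast$L) from $\Delta_1\vdash\varphi$, $\Delta(\Delta_2\mathbin{,}\psi)\vdash\chi$ infer $\Delta((\Delta_1\mathbin{,}\Delta_2)\mathbin{,}(\varphi-\!\!\ast\,\psi))\vdash\chi$; ($\top$R) $\varnothing_a\vdash\top$; ($\top$L) from $\Delta(\varnothing_a)\vdash\varphi$ infer $\Delta(\top)\vdash\varphi$; ($\wedge$R) from $\Delta_1\vdash\varphi$, $\Delta_2\vdash\psi$ infer $\Delta_1\mathbin{;}\Delta_2\vdash\varphi\wedge\psi$; ($\wedge$L) from $\Delta(\varphi\mathbin{;}\psi)\vdash\chi$ infer $\Delta(\varphi\wedge\psi)\vdash\chi$;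 ($\to$R) from $\Delta\mathbin{;}\varphi\vdash\psi$ infer $\Delta\vdash\varphi\to\psi$; ($\to$L) from $\Delta_1\vdash\varphi$, $\Delta(\Delta_2\mathbin{;}\psi)\vdash\chi$ infer $\Delta((\Delta_1\mathbin{;}\Delta_2)\mathbin{;}(\varphi\to\psi))\vdash\chi$; ($\bot$L) $\Delta(\bot)\vdash\varphi$; ($\vee$R1/2) from $\Delta\vdash\varphi$ (resp. $\Delta\vdash\psi$) infer $\Delta\vdash\varphi\vee\psi$; ($\vee$L) from $\Delta(\varphi)\vdash\chi$, $\Delta(\psi)\vdash\chi$ infer $\Delta(\varphi\vee\psi)\vdash\chi$. (No cut rule.) For a formula $\varphi$, $[\![\varphi]\!]^{\mathrm{out}}=\{\Delta\in\mathrm{Bunch}\mid\Delta\vdash_{\mathsf{cf}}\varphi\}$. For $X\subseteq\mathrm{Bunch}$, $\mathrm{cl}(X)=\bigcap\{[\![\varphi]\!]^{\mathrm{out}}\mid X\subseteq[\![\varphi]\!]^{\mathrm{out}}\}$, and $\mathcal C=\{X\subseteq\mathrm{Bunch}\mid X=\mathrm{cl}(X)\}$. *)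

(* Defs.v *)
Definition atom := nat.

Inductive formula : Type :=
| FTop | FBot
| FAnd (p q : formula) | FOr (p q : formula) | FImp (p q : formula)
| FEmp
| FStar (p q : formula) | FWand (p q : formula)
| FAtom (a : atom).

Inductive bunch : Type :=
| BForm (p : formula)
| BEmpM
| BEmpA
| BComma (d1 d2 : bunch)
| BSemi (d1 d2 : bunch).

Inductive bctx : Type :=
| CHole
| CCommaL (c : bctx) (d : bunch)
| CCommaR (d : bunch) (c : bctx)
| CSemiL (c : bctx) (d : bunch)
| CSemiR (d : bunch) (c : bctx).

Fixpoint fill (c : bctx) (g : bunch) : bunch :=
  match c with
  | CHole => g
  | CCommaL c d => BComma (fill c g) d
  | CCommaR d c => BComma d (fill c g)
  | CSemiL c d => BSemi (fill c g) d
  | CSemiR d c => BSemi d (fill c g)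
  end.

Inductive bequiv : bunch -> bunch -> Prop :=
| be_refl d : bequiv d d
| be_sym d1 d2 : bequiv d1 d2 -> bequiv d2 d1
| be_trans d1 d2 d3 : bequiv d1 d2 -> bequiv d2 d3 -> bequiv d1 d3
| be_comma_comm d1 d2 : bequiv (BComma d1 d2) (BComma d2 d1)
| be_comma_assoc d1 d2 d3 :
    bequiv (BComma (BComma d1 d2) d3) (BComma d1 (BComma d2 d3))
| be_comma_unit d : bequiv (BComma d BEmpM) d
| be_semi_comm d1 d2 : bequiv (BSemi d1 d2) (BSemi d2 d1)
| be_semi_assoc d1 d2 d3 :
    bequiv (BSemi (BSemi d1 d2) d3) (BSemi d1 (BSemi d2 d3))
| be_semi_unit d : bequiv (BSemi d BEmpA) d
| be_ctx c d1 d2 : bequiv d1 d2 -> bequiv (fill c d1) (fill c d2).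

Inductive cf : bunch -> formula -> Prop :=
| cf_ax a : cf (BForm (FAtom a)) (FAtom a)
| cf_equiv d d' p : cf d' p -> bequiv d d' -> cf d p
| cf_WSemi c d1 d2 p : cf (fill c d1) p -> cf (fill c (BSemi d1 d2)) p
| cf_CSemi c d1 p : cf (fill c (BSemi d1 d1)) p -> cf (fill c d1) p
| cf_empR : cf BEmpM FEmp
| cf_empL c p : cf (fill c BEmpM) p -> cf (fill c (BForm FEmp)) p
| cf_starR d1 d2 p q : cf d1 p -> cf d2 q -> cf (BComma d1 d2) (FStar p q)
| cf_starL c p q r :
    cf (fill c (BComma (BForm p) (BForm q))) r -> cf (fill c (BForm (FStar p q))) r
| cf_wandR d p q : cf (BComma d (BForm p)) q -> cf d (FWand p q)
| cf_wandL c d1 d2 p q r :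
    cf d1 p -> cf (fill c (BComma d2 (BForm q))) r ->
    cf (fill c (BComma (BComma d1 d2) (BForm (FWand p q)))) r
| cf_topR : cf BEmpA FTop
| cf_topL c p : cf (fill c BEmpA) p -> cf (fill c (BForm FTop)) p
| cf_andR d1 d2 p q : cf d1 p -> cf d2 q -> cf (BSemi d1 d2) (FAnd p q)
| cf_andL c p q r :
    cf (fill c (BSemi (BForm p) (BForm q))) r -> cf (fill c (BForm (FAnd p q))) r
| cf_impR d p q : cf (BSemi d (BForm p)) q -> cf d (FImp p q)
| cf_impL c d1 d2 p q r :
    cf d1 p -> cf (fill c (BSemi d2 (BForm q))) r ->
    cf (fill c (BSemi (BSemi d1 d2) (BForm (FImp p q)))) r
| cf_botL c p : cf (fill c (BForm FBot)) p
| cf_orR1 d p q : cf d p -> cf d (FOr p q)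
| cf_orR2 d p q : cf d q -> cf d (FOr p q)
| cf_orL c p q r :
    cf (fill c (BForm p)) r -> cf (fill c (BForm q)) r -> cf (fill c (BForm (FOr p q))) r.

(* Subsets of Bunch (= bunches modulo bequiv) are represented as predicates on
   raw bunches that are invariant under bequiv. *)
Definition bset := bunch -> Prop.

Definition equiv_closed (X : bset) : Prop :=
  forall d d', bequiv d d' -> X d -> X d'.

Definition sem_out (p : formula) : bset := fun d => cf d p.

Definition cl (X : bset) : bset :=
  fun d => forall p : formula, (forall g, X g -> sem_out p g) -> sem_out p d.

Definition closedC (X : bset) : Prop := forall d, X d <-> cl X d.

Definition resid (X Y : bset) : bset :=
  fun d => forall d', X d' -> Y (BComma d d').

(* Main.v *)
Require Import Defs.

Fixpoint sf (p : formula) : bunch :=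
  match p with
  | FStar a b => BComma (sf a) (sf b)
  | FAnd a b => BSemi (sf a) (sf b)
  | FEmp => BEmpM
  | FTop => BEmpA
  | _ => BForm p
  end.

Fixpoint sb (d : bunch) : bunch :=
  match d with
  | BForm p => sf p
  | BEmpM => BEmpM
  | BEmpA => BEmpA
  | BComma a b => BComma (sb a) (sb b)
  | BSemi a b => BSemi (sb a) (sb b)
  end.

Fixpoint sc (c : bctx) : bctx :=
  match c with
  | CHole => CHole
  | CCommaL c d => CCommaL (sc c) (sb d)
  | CCommaR d c => CCommaR (sb d) (sc c)
  | CSemiL c d => CSemiL (sc c) (sb d)
  | CSemiR d c => CSemiR (sb d) (sc c)
  end.

Fixpoint fm (d : bunch) : formula :=
  match d with
  | BForm p => p
  | BEmpM => FEmp
  | BEmpA => FTop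
  | BComma a b => FStar (fm a) (fm b)
  | BSemi a b => FAnd (fm a) (fm b)
  end.

Fixpoint cc (c c' : bctx) : bctx :=
  match c with
  | CHole => c'
  | CCommaL c d => CCommaL (cc c c') d
  | CCommaR d c => CCommaR d (cc c c')
  | CSemiL c d => CSemiL (cc c c') d
  | CSemiR d c => CSemiR d (cc c c')
  end.

Lemma fill_cc c c' g : fill (cc c c') g = fill c (fill c' g).
Proof. induction c; simpl; try rewrite IHc; reflexivity. Qed.

Lemma sc_cc c c' : sc (cc c c') = cc (sc c) (sc c').
Proof. induction c; simpl; try rewrite IHc; reflexivity. Qed.

Lemma sb_fill c g : sb (fill c g) = fill (sc c) (sb g).
Proof. induction c; simpl; try rewrite IHc; reflexivity. Qed.

Lemma sf_fm d : sf (fm d) = sb d.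
Proof. induction d; simpl; try rewrite IHd1, IHd2; reflexivity. Qed.

Lemma back_form p : forall c r, cf (fill c (sf p)) r -> cf (fill c (BForm p)) r.
Proof.
  induction p; intros c r H; simpl in H; auto.
  - apply cf_topL; exact H.
  - apply cf_andL.
    pose proof (IHp1 (cc c (CSemiL CHole (BForm p2)))) as A; rewrite !fill_cc in A; apply A; clear A.
    pose proof (IHp2 (cc c (CSemiR (sf p1) CHole))) as A; rewrite !fill_cc in A; apply A; exact H.
  - apply cf_empL; exact H.
  - apply cf_starL.
    pose proof (IHp1 (cc c (CCommaL CHole (BForm p2)))) as A; rewrite !fill_cc in A; apply A; clear A.
    pose proof (IHp2 (cc c (CCommaR (sf p1) CHole))) as A; rewrite !fill_cc in A; apply A; exact H.
Qed.

Lemma back_bunch d : forall c r, cf (fill c (sb d)) r -> cf (fill c d) r.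
Proof.
  induction d; intros c r H; simpl in H; auto.
  - apply back_form; exact H.
  - pose proof (IHd1 (cc c (CCommaL CHole d2))) as A; rewrite !fill_cc in A; apply A; clear A.
    pose proof (IHd2 (cc c (CCommaR (sb d1) CHole))) as A; rewrite !fill_cc in A; apply A; exact H.
  - pose proof (IHd1 (cc c (CSemiL CHole d2))) as A; rewrite !fill_cc in A; apply A; clear A.
    pose proof (IHd2 (cc c (CSemiR (sb d1) CHole))) as A; rewrite !fill_cc in A; apply A; exact H.
Qed.

Lemma fold_fm d : forall c r, cf (fill c d) r -> cf (fill c (BForm (fm d))) r.
Proof.
  induction d; intros c r H; simpl; auto.
  - apply cf_empL; exact H.
  - apply cf_topL; exact H.
  - apply cf_starL.
    pose proof (IHd1 (cc c (CCommaL CHole (BForm (fm d2))))) as A; rewrite !fill_cc in A; apply A; clear A.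
    pose proof (IHd2 (cc c (CCommaR d1 CHole))) as A; rewrite !fill_cc in A; apply A; exact H.
  - apply cf_andL.
    pose proof (IHd1 (cc c (CSemiL CHole (BForm (fm d2))))) as A; rewrite !fill_cc in A; apply A; clear A.
    pose proof (IHd2 (cc c (CSemiR d1 CHole))) as A; rewrite !fill_cc in A; apply A; exact H.
Qed.

Lemma sb_equiv d d' : bequiv d d' -> bequiv (sb d) (sb d').
Proof.
  induction 1; simpl; try (econstructor; eauto; fail).
  rewrite !sb_fill. apply be_ctx; auto.
Qed.

Lemma main_sb d r : cf d r -> cf (sb d) r.
Proof.
  induction 1; rewrite ?sb_fill in *; simpl in *.
  - apply cf_ax.
  - eapply cf_equiv; [eassumption | apply sb_equiv; assumption].
  - apply cf_WSemi; assumption.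
  - apply cf_CSemi; assumption.
  - apply cf_empR.
  - assumption.
  - apply cf_starR; assumption.
  - assumption.
  - apply cf_wandR. exact (back_form p (CCommaR _ CHole) _ IHcf).
  - apply cf_wandL; [assumption|]. pose proof (back_form q (cc (sc c) (CCommaR (sb d2) CHole)) r) as A; rewrite !fill_cc in A; exact (A IHcf2).
  - apply cf_topR.
  - assumption.
  - apply cf_andR; assumption.
  - assumption.
  - apply cf_impR. exact (back_form p (CSemiR _ CHole) _ IHcf).
  - apply cf_impL; [assumption|]. pose proof (back_form q (cc (sc c) (CSemiR (sb d2) CHole)) r) as A; rewrite !fill_cc in A; exact (A IHcf2).
  - apply cf_botL.
  - apply cf_orR1; assumption.
  - apply cf_orR2; assumption.
  - apply cf_orL.
    + exact (back_form p (sc c) _ IHcf1).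
    + exact (back_form q (sc c) _ IHcf2).
Qed.

Lemma wand_inv d r : cf d r -> forall p q, r = FWand p q -> cf (BComma d (BForm p)) q.
Proof.
  induction 1; intros p0 q0 E; try discriminate.
  - eapply cf_equiv; [apply IHcf; eassumption|].
    apply (be_ctx (CCommaL CHole (BForm p0))); assumption.
  - apply (cf_WSemi (CCommaL c (BForm p0))); apply IHcf; assumption.
  - apply (cf_CSemi (CCommaL c (BForm p0))); apply IHcf; assumption.
  - apply (cf_empL (CCommaL c (BForm p0))); apply IHcf; assumption.
  - apply (cf_starL (CCommaL c (BForm p0))); apply IHcf; assumption.
  - injection E; intros; subst. assumption.
  - apply (cf_wandL (CCommaL c (BForm p0))); [assumption|]; apply IHcf2; assumption.
  - apply (cf_topL (CCommaL c (BForm p0))); apply IHcf; assumption.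
  - apply (cf_andL (CCommaL c (BForm p0))); apply IHcf; assumption.
  - apply (cf_impL (CCommaL c (BForm p0))); [assumption|]; apply IHcf2; assumption.
  - apply (cf_botL (CCommaL c (BForm p0))).
  - apply (cf_orL (CCommaL c (BForm p0))); [apply IHcf1|apply IHcf2]; assumption.
Qed.

Theorem lemma6p4 (X Y : bset) :
  equiv_closed X -> closedC Y -> closedC (resid X Y).
Proof.
  intros _ HY d; split.
  - intros Hd p Hp. apply Hp; exact Hd.
  - intros Hcl d' Xd'. apply HY. intros p Hp.
    assert (H1 : cf d (FWand (fm d') p)).
    { apply Hcl. intros g Hg. apply cf_wandR.
      exact (fold_fm d' (CCommaR g CHole) p (Hp _ (Hg d' Xd'))). }
    pose proof (wand_inv _ _ H1 _ _ eq_refl) as H2.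
    apply main_sb in H2. simpl in H2. rewrite sf_fm in H2.
    exact (back_bunch (BComma d d') CHole p H2).
Qed.
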